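(* Consider a graphical constant-sum game with a fully-mixed Nash equilibrium $\hat{\mathbf{x}}^*=(\mathbf{x}^*_1,\ldots,\mathbf{x}^*_m)$, and suppose each agent $i$ uses a learning dynamic whose learning operator with shift $\mathbf{x}^*_i$ is finitely lossless via a storage function $L^i$, so that the merged learning operator with shift $\hat{\mathbf{x}}^*$ is finitely lossless via $L_1(\hat{\mathbf{q}})=\sum_iL^i(\mathbf{q}_i)$. Then the feedback interconnection system of this merged learning operator with the game operator with shift $\hat{\mathbf{x}}^*$ is finitely lossless via the storage function $L_1$: for every initial state, every external input $\mathbf{r}$ and every $t\ge0$, $L_1(\hat{\mathbf{q}}(t))=L_1(\hat{\mathbf{q}}(0))+\int_0^t\langle\mathbf{r}(\tau),\hat{\mathbf{x}}(\tau)-\hat{\mathbf{x}}^*\rangle\,d\tau$. In particular, when $\mathbf{r}\equiv\mathbf{0}$, $L_1(\hat{\mathbf{q}}(t))$ is constant in $t$.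
   Context: Agent $i\in\{1,\ldots,m\}$ has $n_i$ actions; $\Delta^{n}=\{\mathbf{x}\in\mathbb{R}^n:x_j\ge0,\sum_jx_j=1\}$, $\Delta=\prod_i\Delta^{n_i}$. A graphical game has matrices $\mathbf{A}^{ik}\in\mathbb{R}^{n_i\times n_k}$ ($i\ne k$); agent $i$'s payoff vector is $\mathbf{p}_i=\sum_{k\neq i}\mathbf{A}^{ik}\mathbf{x}_k$ and payoff $\langle\mathbf{x}_i,\mathbf{p}_i\rangle$; it is constant-sum if $\mathbf{A}^{ik}_{j\ell}+\mathbf{A}^{ki}_{\ell j}=c^{\{i,k\}}$ for constants $c^{\{i,k\}}$ and all $j,\ell$. A Nash equilibrium $\hat{\mathbf{x}}^*\in\Delta$ has each $\mathbf{x}^*_i$ a best response to the others; fully mixed means all entries positive. A learning dynamic over $n$ actions has conversion function $f:\mathbb{R}^n\to\Delta^n$, state $\mathbf{q}(t)=\mathbf{q}^0+\int_0^t\mathbf{u}(\tau)d\tau$ for input $\mathbf{u}$, and strategy $\mathbf{x}=f(\mathbf{q})$; its learning operator with shift $\mathbf{x}^*$ outputs $\mathbf{x}-\mathbf{x}^*$ and is finitely lossless via $L$ if $L$ is bounded below and $L(\mathbf{q}(t))=L(\mathbf{q}^0)+\int_0^t\langle\mathbf{u},\mathbf{x}-\mathbf{x}^*\rangle d\tau$ for all initial states, inputs and $t$. The merged learning operator concatenates the agents' operators (input $\hat{\mathbf{u}}$, state $\hat{\mathbf{q}}$, output $\hat{\mathbf{x}}-\hat{\mathbf{x}}^*$).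 The game operator with shift $\hat{\mathbf{x}}^*$ maps input $\hat{\mathbf{x}}-\hat{\mathbf{x}}^*$ to output $-\hat{\mathbf{p}}$. The feedback interconnection system with external input $\mathbf{r}$ is defined by: the merged learning operator's input is $\hat{\mathbf{u}}=\mathbf{r}-(-\hat{\mathbf{p}})=\mathbf{r}+\hat{\mathbf{p}}$, its output $\hat{\mathbf{x}}-\hat{\mathbf{x}}^*$ is the game operator's input, and $\hat{\mathbf{p}}$ is computed from $\hat{\mathbf{x}}$ by the game; the system's output is $\hat{\mathbf{x}}-\hat{\mathbf{x}}^*$. Solutions are assumed to exist and be unique. *)

(* Defs.v *)
From HB Require Import structures.
From mathcomp Require Import all_boot all_order all_algebra.
From mathcomp Require Import all_classical all_reals.
From mathcomp Require Import interval_inference topology normedtype sequences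
  measure lebesgue_measure lebesgue_integral.
Unset Printing Implicit Defensive.
Import Order.TTheory GRing.Theory Num.Theory.
Local Open Scope classical_set_scope.
Local Open Scope ring_scope.

Section Defs.
Variable R : realType.
Implicit Types k : nat.

Definition dotv {k : nat} (x y : 'I_k -> R) : R := \sum_(j < k) x j * y j.

Definition subv {k : nat} (x y : 'I_k -> R) : 'I_k -> R := fun j => x j - y j.

Definition in_simplex {k : nat} (x : 'I_k -> R) : Prop :=
  (forall j, 0 <= x j) /\ \sum_(j < k) x j = 1.

Definition integrable_0t (t : R) (g : R -> R) : Prop :=
  (@lebesgue_measure R).-integrable `[0, t] (EFin \o g).

Definition integral_0t (t : R) (g : R -> R) : R :=
  Rintegral (@lebesgue_measure R) `[0, t] g.

Definition admissible_input {k : nat} (u : R -> 'I_k -> R) : Prop :=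
  forall t, 0 <= t -> forall j, integrable_0t t (fun s => u s j).

Definition ld_state {k : nat} (q0 : 'I_k -> R) (u : R -> 'I_k -> R) :
  R -> 'I_k -> R :=
  fun t j => q0 j + integral_0t t (fun s => u s j).

(** the learning operator of conversion function f with shift xs
    (input u, output f(q) - xs) is finitely lossless via L *)
Definition finitely_lossless {k : nat} (f : ('I_k -> R) -> ('I_k -> R))
    (xs : 'I_k -> R) (L : ('I_k -> R) -> R) : Prop :=
  (exists c : R, forall q, c <= L q) /\
  forall (q0 : 'I_k -> R) (u : R -> 'I_k -> R), admissible_input u ->
  forall t, 0 <= t ->
    integrable_0t t (fun s => dotv (u s) (subv (f (ld_state q0 u s)) xs)) /\
    L (ld_state q0 u t) =
      L q0 + integral_0t t (fun s => dotv (u s) (subv (f (ld_state q0 u s)) xs)).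

(** graphical games with m agents, agent i having n i actions *)
Variables (m : nat) (n : 'I_m -> nat).

Definition profile := forall i : 'I_m, 'I_(n i) -> R.

Definition game := forall i k : 'I_m, 'I_(n i) -> 'I_(n k) -> R.

Definition payoff_vec (A : game) (x : profile) (i : 'I_m) : 'I_(n i) -> R :=
  fun j => \sum_(k < m | k != i) \sum_(l < n k) A i k j l * x k l.

Definition constant_sum (A : game) : Prop :=
  forall i k : 'I_m, i != k ->
    exists c : R, forall j l, A i k j l + A k i l j = c.

Definition in_Delta (x : profile) : Prop := forall i, in_simplex (x i).

Definition nash_eq (A : game) (xs : profile) : Prop :=
  in_Delta xs /\
  forall i (y : 'I_(n i) -> R), in_simplex y ->
    dotv y (payoff_vec A xs i) <= dotv (xs i) (payoff_vec A xs i).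

Definition fully_mixed (xs : profile) : Prop := forall i j, 0 < xs i j.

Definition merged_storage (L : forall i : 'I_m, ('I_(n i) -> R) -> R)
  (q : profile) : R := \sum_(i < m) L i (q i).

Definition strat_traj (f : forall i : 'I_m, ('I_(n i) -> R) -> ('I_(n i) -> R))
  (q : R -> profile) : R -> profile := fun s i => f i (q s i).

Definition closed_loop_input (A : game)
  (f : forall i : 'I_m, ('I_(n i) -> R) -> ('I_(n i) -> R))
  (r q : R -> profile) : R -> profile :=
  fun s i j => r s i j + payoff_vec A (strat_traj f q s) i j.

(** q is a solution (for t >= 0) of the feedback interconnection of the
    merged learning operator with the game operator, with external input r *)
Definition feedback_solution (A : game)
  (f : forall i : 'I_m, ('I_(n i) -> R) -> ('I_(n i) -> R))
  (r q : R -> profile) : Prop :=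
  (forall i, admissible_input (fun s => closed_loop_input A f r q s i)) /\
  forall t, 0 <= t -> forall i j,
    q t i j = q 0 i j + integral_0t t (fun s => closed_loop_input A f r q s i j).

End Defs.

Arguments dotv {R k} x y.
Arguments subv {R k} x y _.
Arguments in_simplex {R k} x.
Arguments integrable_0t {R} t g.
Arguments integral_0t {R} t g.
Arguments admissible_input {R k} u.
Arguments ld_state {R k} q0 u _ _.
Arguments finitely_lossless {R k} f xs L.
Arguments payoff_vec {R m n} A x i _.
Arguments constant_sum {R m n} A.
Arguments in_Delta {R m n} x.
Arguments nash_eq {R m n} A xs.
Arguments fully_mixed {R m n} xs.
Arguments merged_storage {R m n} L q.
Arguments strat_traj {R m n} f q _ _ _.
Arguments closed_loop_input {R m n} A f r q _ i _.
Arguments feedback_solution {R m n} A f r q.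

(* Main.v *)
Require Import Defs.
From mathcomp Require Import all_boot all_order all_algebra.
From mathcomp Require Import all_classical all_reals.
From mathcomp Require Import interval_inference topology normedtype sequences
  measure lebesgue_measure lebesgue_integral.
From mathcomp Require Import ring lra.
Import Order.TTheory GRing.Theory Num.Theory.
Local Open Scope classical_set_scope.
Local Open Scope ring_scope.

Lemma Rint_sum (R : realType) t (I : Type) (s : seq I) (h : I -> R -> R) :
  (forall i, integrable_0t t (h i)) ->
  integrable_0t t (fun x => \sum_(i <- s) h i x) /\
  integral_0t t (fun x => \sum_(i <- s) h i x) = \sum_(i <- s) integral_0t t (h i).
Proof.
move=> hi; elim: s => [|a s [IH1 IH2]].
  have -> : (fun x => \sum_(i <- [::]) h i x) = (fun _ => 0 : R).
    by apply: funext => x; rewrite big_nil.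
  rewrite /integrable_0t /integral_0t big_nil.
  split; last by rewrite Rintegral_cst // mul0r.
  exact: integrable0.
have -> : (fun x => \sum_(i <- a :: s) h i x) = (fun x => h a x + \sum_(i <- s) h i x).
  by apply: funext => x; rewrite big_cons.
rewrite big_cons /integrable_0t /integral_0t.
split.
  exact: (integrableD _ (hi a) IH1).
rewrite RintegralD //; first by rewrite -IH2.
exact: hi.
Qed.

Lemma in_0t (R : realType) (t s : R) : s \in `[0, t] -> 0 <= s.
Proof. by rewrite in_itv /= => /andP[]. Qed.

Lemma dotvD (R : realType) k (a b c : 'I_k -> R) :
  dotv (fun j => a j + b j) c = dotv a c + dotv b c.
Proof. by rewrite /dotv -big_split; apply: eq_bigr => j _; rewrite mulrDl. Qed.

Lemma dotv_sub (R : realType) k (p a b : 'I_k -> R) :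
  dotv p (subv a b) = dotv a p - dotv b p.
Proof.
rewrite /dotv /subv -sumrB; apply: eq_bigr => j _; ring.
Qed.

Lemma fm_const (R : realType) k (xs v : 'I_k -> R) :
  in_simplex xs -> (forall j, 0 < xs j) ->
  (forall y, in_simplex y -> dotv y v <= dotv xs v) ->
  forall y, in_simplex y -> dotv y v = dotv xs v.
Proof.
move=> [xs0 xs1] xpos Hle.
set M := dotv xs v.
have e_simp : forall j0 : 'I_k, in_simplex (fun l => (l == j0)%:R : R).
  move=> j0; split; first by move=> l; case: (l == j0).
  rewrite (bigD1 j0) //= eqxx big1 ?addr0 // => l /negbTE ->; by [].
have vle : forall j0, v j0 <= M.
  move=> j0; have := Hle _ (e_simp j0).
  rewrite /dotv (bigD1 j0) //= eqxx mul1r big1 ?addr0 //.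
  by move=> l /negbTE ->; rewrite mul0r.
have Hsum : \sum_(j < k) xs j * (M - v j) = 0.
  have -> : \sum_(j < k) xs j * (M - v j) = (\sum_(j < k) xs j) * M - M.
    by rewrite mulr_suml -sumrB; apply: eq_bigr => j _; rewrite mulrBr.
  by rewrite xs1 mul1r subrr.
have veq : forall j, v j = M.
  move=> j.
  have Hnn : forall j0 : 'I_k, true -> 0 <= xs j0 * (M - v j0).
    by move=> j0 _; rewrite mulr_ge0 // subr_ge0.
  have H := psumr_eq0P Hnn Hsum.
  have /eqP := H j isT; rewrite mulf_eq0 => /orP[/eqP|].
    by move=> x0; have := xpos j; rewrite x0 ltxx.
  by rewrite subr_eq0 => /eqP ->.
move=> y [_ y1]; rewrite /dotv.
under eq_bigr do rewrite veq.
by rewrite -mulr_suml y1 mul1r.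
Qed.

Section Game.
Variables (R : realType) (m : nat) (n : 'I_m -> nat) (A : game R m n).

Definition Bf (x y : profile R m n) : R := \sum_(i < m) dotv (x i) (payoff_vec A y i).

Lemma Bexp x y : Bf x y = \sum_(i < m) \sum_(k < m) (k != i)%:R *
   \sum_(j < n i) \sum_(l < n k) x i j * A i k j l * y k l.
Proof.
rewrite /Bf; apply: eq_bigr => i _; rewrite /dotv /payoff_vec.
under eq_bigr do rewrite big_mkcond mulr_sumr.
rewrite exchange_big /=; apply: eq_bigr => k _.
rewrite mulr_sumr; apply: eq_bigr => j _.
case: (k != i) => /=.
  by rewrite mul1r mulr_sumr; apply: eq_bigr => l _; rewrite mulrA.
by rewrite !mul0r mulr0.
Qed.

Lemma Bsym x y : Bf x y + Bf y x = \sum_(i < m) \sum_(k < m) (k != i)%:R *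
   \sum_(j < n i) \sum_(l < n k) x i j * y k l * (A i k j l + A k i l j).
Proof.
rewrite !Bexp [X in _ + X]exchange_big /= -big_split; apply: eq_bigr => i _.
rewrite -big_split; apply: eq_bigr => k _ /=.
rewrite [X in _ + _ * X]exchange_big /= [i == k]eq_sym -mulrDr; congr (_ * _).
rewrite -big_split; apply: eq_bigr => j _.
rewrite -big_split; apply: eq_bigr => l _ /=; ring.
Qed.

Lemma pair_const x y x' y' : constant_sum A ->
  in_Delta x -> in_Delta y -> in_Delta x' -> in_Delta y' ->
  Bf x y + Bf y x = Bf x' y' + Bf y' x'.
Proof.
move=> Hcs Hx Hy Hx' Hy'; rewrite !Bsym; apply: eq_bigr => i _.
apply: eq_bigr => k _; case: (boolP (k != i)) => [ki|]; last by rewrite !mul0r.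
rewrite eq_sym in ki; have [c Hc] := Hcs i k ki.
have E : forall (u : profile R m n) (w : profile R m n), in_Delta u -> in_Delta w ->
   \sum_(j < n i) \sum_(l < n k) u i j * w k l * (A i k j l + A k i l j) = c.
  move=> u w Hu Hw; have [_ u1] := Hu i; have [_ w1] := Hw k.
  transitivity (\sum_(j < n i) u i j * (\sum_(l < n k) w k l) * c).
    apply: eq_bigr => j _; rewrite mulr_sumr mulr_suml; apply: eq_bigr => l _.
    rewrite Hc; ring.
  by rewrite -!mulr_suml u1 w1 !mul1r.
by rewrite E // E.
Qed.

Lemma G0 xs x : constant_sum A -> nash_eq A xs -> fully_mixed xs -> in_Delta x ->
  \sum_(i < m) dotv (payoff_vec A x i) (subv (x i) (xs i)) = 0.
Proof.
move=> Hcs [Hd Hn] Hfm Hx.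
have -> : \sum_(i < m) dotv (payoff_vec A x i) (subv (x i) (xs i)) = Bf x x - Bf xs x.
  by rewrite /Bf -sumrB; apply: eq_bigr => i _; rewrite dotv_sub.
have Hb : Bf x xs = Bf xs xs.
  apply: eq_bigr => i _; apply: fm_const => //; try exact: Hd; try exact: Hn; exact: Hx.
have H1 := @pair_const x x xs xs Hcs Hx Hx Hd Hd.
have H2 := @pair_const xs x xs xs Hcs Hd Hx Hd Hd.
rewrite Hb in H2; lra.
Qed.

End Game.

Theorem corollaryC1 (R : realType) (m : nat) (n : 'I_m -> nat)
  (A : game R m n) (xs : profile R m n)
  (f : forall i : 'I_m, ('I_(n i) -> R) -> ('I_(n i) -> R))
  (L : forall i : 'I_m, ('I_(n i) -> R) -> R) :
  constant_sum A ->
  nash_eq A xs -> fully_mixed xs ->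
  (forall i q, in_simplex (f i q)) ->
  (forall i, finitely_lossless (f i) (xs i) (L i)) ->
  forall (r q : R -> profile R m n),
    (forall i, admissible_input (fun s => r s i)) ->
    feedback_solution A f r q ->
    (forall t, 0 <= t ->
      integrable_0t t (fun s => \sum_(i < m)
          dotv (r s i) (subv (strat_traj f q s i) (xs i))) /\
      merged_storage L (q t) =
        merged_storage L (q 0) +
        integral_0t t (fun s => \sum_(i < m)
          dotv (r s i) (subv (strat_traj f q s i) (xs i)))) /\
    ((forall s i j, r s i j = 0) ->
      forall t, 0 <= t -> merged_storage L (q t) = merged_storage L (q 0)).
Proof.
move=> Hcs Hne Hfm Hf Hll r q Hr [Hadm Hsol].
set g := fun i s => dotv (closed_loop_input A f r q s i) (subv (strat_traj f q s i) (xs i)).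
have key : forall s, \sum_(i < m) g i s =
    \sum_(i < m) dotv (r s i) (subv (strat_traj f q s i) (xs i)).
  move=> s; rewrite /g /closed_loop_input.
  under eq_bigr do rewrite dotvD.
  rewrite big_split /= G0 ?addr0 //.
  by move=> i; exact: Hf.
have part1 : forall t, 0 <= t ->
      integrable_0t t (fun s => \sum_(i < m)
          dotv (r s i) (subv (strat_traj f q s i) (xs i))) /\
      merged_storage L (q t) =
        merged_storage L (q 0) +
        integral_0t t (fun s => \sum_(i < m)
          dotv (r s i) (subv (strat_traj f q s i) (xs i))).
  move=> t t0.
  have Hi : forall i, integrable_0t t (g i) /\ L i (q t i) = L i (q 0 i) + integral_0t t (g i).
    move=> i; have [_ H] := Hll i.
    have [I1 E1] := H (q 0 i) (fun s => closed_loop_input A f r q s i) (Hadm i) t t0.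
    have eqst : forall s, 0 <= s ->
        ld_state (q 0 i) (fun s => closed_loop_input A f r q s i) s = q s i.
      by move=> s s0; apply: funext => j; rewrite /ld_state (Hsol s s0 i j).
    have eqg : {in `[0, t], (fun s => dotv (closed_loop_input A f r q s i)
        (subv (f i (ld_state (q 0 i) (fun s => closed_loop_input A f r q s i) s)) (xs i)))
        =1 g i}.
      by move=> s /in_0t s0; rewrite /g /strat_traj eqst.
    split.
      apply: (eq_integrable _ _ _ _ I1) => // s /set_mem sD /=; have s0 : 0 <= s by (move: sD; rewrite /= in_itv /= => /andP[]).
      by rewrite /g /strat_traj eqst.
    rewrite -(eqst t t0) E1 /integral_0t; congr (_ + _); apply: eq_Rintegral => s /set_mem sD; have s0 : 0 <= s by (move: sD; rewrite /= in_itv /= => /andP[]).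
    by rewrite /g /strat_traj eqst.
  have [Is Es] := @Rint_sum R t _ (index_enum 'I_m) g (fun i => (Hi i).1).
  have <- : (fun s => \sum_(i < m) g i s) =
      (fun s => \sum_(i < m) dotv (r s i) (subv (strat_traj f q s i) (xs i))).
    by apply: funext => s; rewrite key.
  split; first exact: Is.
  rewrite Es /merged_storage -big_split; apply: eq_bigr => i _; exact: (Hi i).2.
split; first exact: part1.
move=> r0 t t0; rewrite (part1 t t0).2.
have -> : (fun s => \sum_(i < m) dotv (r s i) (subv (strat_traj f q s i) (xs i))) =
   (fun _ => 0 : R).
  apply: funext => s; apply: big1 => i _; apply: big1 => j _; by rewrite r0 mul0r.
by rewrite /integral_0t Rintegral_cst // mul0r addr0.
Qed.
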